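(* For every tree $T$, $\gamma^{DLD}(T)=\beta(T)$.
   Context: For a vertex $u$, $N(u)$ is its set of neighbours and $N[u]=N(u)\cup\{u\}$. A code in a graph with vertex set $V$ is a non-empty subset $C\subseteq V$; $I(C;u)=N[u]\cap C$. A code $C$ is solid-locating-dominating if $I(C;u)\ne\emptyset$ for every $u\in V\setminus C$ and $I(C;u)\not\subseteq I(C;v)$ for all distinct $u,v\in V\setminus C$; $\gamma^{DLD}$ denotes the minimum size of such a code. $\beta(T)$ is the independence number of $T$ (maximum size of a set of pairwise non-adjacent vertices). *)

(* Defs.v *)
From mathcomp Require Import all_boot.
Set Implicit Arguments. Unset Strict Implicit. Unset Printing Implicit Defensive.

Section Graph.
Variables (T : finType) (e : rel T).

Definition simple_graph := symmetric e /\ irreflexive e.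

Definition cnbhd (u : T) : {set T} := [set v | (v == u) || e u v].

Definition Icode (C : {set T}) (u : T) : {set T} := cnbhd u :&: C.

Definition solid_LD (C : {set T}) : Prop :=
  C != set0 /\
  (forall u, u \notin C -> Icode C u != set0) /\
  (forall u v, u \notin C -> v \notin C -> u != v -> ~~ (Icode C u \subset Icode C v)).

Definition independent (S : {set T}) : Prop :=
  forall x y, x \in S -> y \in S -> ~~ e x y.

Definition n_edges : nat := #|[set p : T * T | e p.1 p.2]| %/ 2.

Definition is_tree : Prop :=
  simple_graph /\ 0 < #|T| /\ (forall x y, connect e x y) /\ n_edges = #|T| - 1.

End Graph.

Definition is_min_card (T : finType) (P : {set T} -> Prop) (n : nat) : Prop :=
  (exists C, P C /\ #|C| = n) /\ (forall C, P C -> n <= #|C|).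

Definition is_max_card (T : finType) (P : {set T} -> Prop) (n : nat) : Prop :=
  (exists S, P S /\ #|S| = n) /\ (forall S, P S -> #|S| <= n).

Definition gammaDLD_is (T : finType) (e : rel T) (n : nat) := is_min_card (solid_LD e) n.
Definition beta_is (T : finType) (e : rel T) (n : nat) := is_max_card (independent e) n.

(* Main.v *)
Require Import Defs.
From mathcomp Require Import all_boot.
From mathcomp Require Import zify.
Set Implicit Arguments. Unset Strict Implicit. Unset Printing Implicit Defensive.

Section G.
Variables (T : finType) (e : rel T).
Hypothesis esym : symmetric e.
Hypothesis eirr : irreflexive e.

Definition deg (B : {set T}) x := #|[set y in B | e x y]|.
Definition E (A B : {set T}) := \sum_(x in A) deg B x.

Lemma degE (B : {set T}) (x : T) : deg B x = \sum_(y in B) (e x y : nat).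
Proof.
rewrite /deg -sum1_card.
rewrite (eq_bigl (fun y => (y \in B) && e x y)); last by move=> y; rewrite inE.
by rewrite big_mkcondr; apply: eq_bigr => y _; case: (e x y).
Qed.

Lemma deg_sub (B B' : {set T}) (x : T) : B \subset B' -> deg B x <= deg B' x.
Proof.
move=> sB; apply: subset_leq_card; apply/subsetP => y; rewrite !inE.
by case/andP => /(subsetP sB) -> ->.
Qed.

Lemma E_subr (A B B' : {set T}) : B \subset B' -> E A B <= E A B'.
Proof. by move=> sB; apply: leq_sum => x _; apply: deg_sub. Qed.

Lemma E_U (A1 A2 B : {set T}) : [disjoint A1 & A2] -> E (A1 :|: A2) B = E A1 B + E A2 B.
Proof.
move=> d; rewrite /E -bigU //; apply: eq_bigl => x; by rewrite !inE.
Qed.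

Lemma E_sym (A B : {set T}) : E A B = E B A.
Proof.
rewrite /E; under eq_bigr do rewrite degE.
rewrite exchange_big; apply: eq_bigr => y _; rewrite degE.
by apply: eq_bigr => x _; rewrite esym.
Qed.

Lemma deg_U (B1 B2 : {set T}) (x : T) : [disjoint B1 & B2] -> deg (B1 :|: B2) x = deg B1 x + deg B2 x.
Proof.
move=> d; rewrite !degE -bigU //; apply: eq_bigl => y; by rewrite !inE.
Qed.

Lemma E_TT : E setT setT = #|[set p : T * T | e p.1 p.2]|.
Proof.
rewrite /E (eq_bigr (fun x => \sum_y (e x y : nat))); last first.
  by move=> x _; rewrite degE; apply: eq_bigl => y; rewrite in_setT.
rewrite (eq_bigl xpredT); last by move=> x; rewrite in_setT.
rewrite pair_big /= -sum1_card [RHS]big_mkcond /=.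
by apply: eq_bigr => p _; rewrite inE; case: (e p.1 p.2).
Qed.

Lemma E_Ur (A B1 B2 : {set T}) : [disjoint B1 & B2] -> E A (B1 :|: B2) = E A B1 + E A B2.
Proof. by move=> d; rewrite E_sym E_U // E_sym [E B2 A]E_sym. Qed.

Lemma E_set1 (x : T) (B : {set T}) : E [set x] B = deg B x.
Proof. by rewrite /E big_set1. Qed.

Lemma deg_ge1 (B : {set T}) x y : y \in B -> e x y -> 0 < deg B x.
Proof. by move=> yB exy; apply/card_gt0P; exists y; rewrite inE yB exy. Qed.

Lemma deg_ge2 (B : {set T}) x y z : y \in B -> z \in B -> y != z -> e x y -> e x z -> 1 < deg B x.
Proof.
move=> yB zB yz exy exz; rewrite /deg.
have -> : 2 = #|[set y; z]| by rewrite cards2 yz.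
by apply: subset_leq_card; apply/subsetP => t; rewrite !inE => /orP[]/eqP->; rewrite ?yB ?zB ?exy ?exz.
Qed.

Section Tree.
Hypothesis hT : 0 < #|T|.
Hypothesis hconn : forall x y, connect e x y.
Hypothesis hedges : n_edges e = #|T| - 1.

Lemma E_TT_lt : E setT setT < 2 * #|T|.
Proof.
rewrite E_TT; have := ltn_ceil #|[set p : T * T | e p.1 p.2]| (isT : 0 < 2).
move: hedges; rewrite /n_edges => ->.
generalize #|[set p : T * T | e p.1 p.2]| #|T| hT => a b; clear; lia.
Qed.

Lemma cross (W : {set T}) w x : w \in W -> x \notin W -> exists w' x', [/\ w' \in W, x' \notin W & e w' x'].
Proof.
move=> wW xW.
case: (boolP [exists w' in W, exists x' in ~: W, e w' x']).
  by case/exists_inP => w' w'W /exists_inP [x' x'W ex]; exists w', x'; rewrite -in_setC.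
move/exists_inPn => H.
have cl : closed e (mem W).
  move=> a b eab; apply/idP/idP => [aW|bW]; apply/negPn/negP => nW.
    by have := H a aW; move/exists_inPn => /(_ b); rewrite in_setC nW eab => /(_ isT).
  by have := H b bW; move/exists_inPn => /(_ a); rewrite in_setC nW esym eab => /(_ isT).
by have := closed_connect cl (hconn w x); rewrite wW (negbTE xW).
Qed.

Lemma grow m : forall W : {set T}, W != set0 -> #|~: W| = m -> E W W + 2 * m <= E setT setT.
Proof.
elim: m => [|m IH] W W0 cW.
  have -> : W = setT by rewrite -(setCK W) (cards0_eq cW) setC0.
  by rewrite addn0.
case/set0Pn: W0 => w wW.
have [x xW] : exists x, x \notin W.
  have : 0 < #|~: W| by rewrite cW.
  by case/card_gt0P => x; rewrite in_setC; exists x.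
have [w' [x' [w'W x'W ex]]] := cross wW xW.
have W'0 : x' |: W != set0 by apply/set0Pn; exists x'; rewrite !inE eqxx.
have cW' : #|~: (x' |: W)| = m.
  have := cardsC W; have := cardsC (x' |: W); rewrite cardsU1 x'W.
  move: cW; generalize #|W| #|~: W| #|~: (x' |: W)| #|T| => a b c d; clear; lia.
have := IH _ W'0 cW'.
have dis : [disjoint [set x'] & W] by rewrite disjoints1.
rewrite E_U // E_Ur // [E W (x' |: W)]E_Ur // [E W [set x']]E_sym !E_set1.
have h1 : 0 < deg W x' by apply: (deg_ge1 w'W); rewrite esym.
move: h1.
generalize (deg W x') (deg [set x'] x') (E W W) (E setT setT) => a b c d; clear; lia.
Qed.

Lemma forest (W : {set T}) : W != set0 -> E W W < 2 * #|W|.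
Proof.
move=> W0; have := @grow #|~: W| W W0 (erefl _); have := E_TT_lt; have := cardsC W.
generalize (E W W) #|W| #|~: W| #|T| (E setT setT) => a b c d f; clear; lia.
Qed.

Lemma lemG (X Y : {set T}) : [disjoint X & Y] -> X != set0 -> (forall x, x \in X -> 1 < deg Y x) -> #|X| < #|Y|.
Proof.
move=> dXY X0 H.
have W0 : X :|: Y != set0.
  by case/set0Pn: X0 => x xX; apply/set0Pn; exists x; rewrite inE xX.
have := forest W0; rewrite cardsU (disjoint_setI0 dXY) cards0 subn0.
have dYX : [disjoint Y & X] by rewrite disjoint_sym.
rewrite E_U // E_Ur // E_Ur // [E Y X]E_sym.
have : 2 * #|X| <= E X Y.
  by rewrite mulnC -sum_nat_const; apply: leq_sum => x /H.
generalize (E X Y) (E X X) (E Y Y) #|X| #|Y| => a b c d f; clear; lia.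
Qed.


Lemma disjP (A B : {set T}) : (forall x, x \in A -> x \in B -> False) -> [disjoint A & B].
Proof.
move=> H; rewrite disjoint_subset; apply/subsetP => x xA; rewrite inE /=.
by apply/negP => /(H x xA).
Qed.

Lemma IcodeE (C : {set T}) x : x \notin C -> Icode e C x = [set y in C | e x y].
Proof.
move=> xC; apply/setP => y; rewrite !inE.
case: (eqVneq y x) => [->|_] /=; first by rewrite (negbTE xC) ?andbF.
by rewrite andbC.
Qed.

Lemma lower (C S : {set T}) : solid_LD e C -> independent e S -> #|S| <= #|C|.
Proof.
move=> [C0 [dom sep]] ind.
pose X := S :\: C.
pose X1 := [set x in X | deg C x == 1].
pose X2 := [set x in X | 1 < deg C x].
have degpos : forall x, x \in X -> 0 < deg C x.
  move=> x; rewrite inE => /andP[xC _]; have := dom x xC; rewrite IcodeE //.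
  by case/set0Pn => y yI; apply/card_gt0P; exists y.
have XU : X = X1 :|: X2.
  apply/setP => x; rewrite !inE.
  have := degpos x; rewrite inE; case: ((x \notin C) && (x \in S)) => //= /(_ isT).
  by case: (deg C x) => [|[|k]].
have dX12 : [disjoint X1 & X2].
  by apply/disjP => x; rewrite !inE => /andP[_ /eqP->] /andP[].
pose f x := odflt x [pick y in C | e x y].
have fP : forall x, x \in X1 -> [/\ Icode e C x = [set f x], f x \in C & e x (f x)].
  move=> x; rewrite !inE => /andP[/andP[xC xS] /cards1P [c Hc]].
  have fx : f x = c.
    rewrite /f; case: pickP => [y Hy|H] /=.
      have : y \in [set y in C | e x y] by rewrite inE.
      by rewrite Hc inE => /eqP.
    have : c \in [set y in C | e x y] by rewrite Hc inE.
    by rewrite inE; move: (H c) => /= ->.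
  have : c \in [set y in C | e x y] by rewrite Hc inE.
  by rewrite inE fx IcodeE // Hc => /andP[-> ->].
have X1S : forall x, x \in X1 -> x \in S /\ x \notin C.
  by move=> x; rewrite !inE => /andP[/andP[-> ->]].
have X2S : forall x, x \in X2 -> x \in S /\ x \notin C.
  by move=> x; rewrite !inE => /andP[/andP[-> ->]].
pose Z := C :\: S.
have fZ : forall x, x \in X1 -> f x \in Z.
  move=> x xX1; have [_ fC efx] := fP x xX1; have [xS _] := X1S x xX1.
  rewrite inE fC andbT; apply/negP => fS.
  by have := ind _ _ xS fS; rewrite efx.
have finj : {in X1 &, injective f}.
  move=> x x' xX x'X fe; apply/eqP/negPn/negP => nx.
  have [xS xC] := X1S x xX; have [x'S x'C] := X1S x' x'X.
  have := sep x x' xC x'C nx; have [-> _ _] := fP x xX; have [-> _ _] := fP x' x'X.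
  by rewrite fe subxx.
have fX2 : forall x x', x \in X2 -> x' \in X1 -> ~~ e x (f x').
  move=> x x' xX x'X; apply/negP => exf.
  have [xS xC] := X2S x xX; have [x'S x'C] := X1S x' x'X.
  have nx : x' != x.
    apply/negP => /eqP ex; move: xX x'X; rewrite ex !inE => /andP[_ h] /andP[_ /eqP h'].
    by rewrite h' in h.
  have := sep x' x x'C xC nx; have [-> fC _] := fP x' x'X.
  by rewrite IcodeE // sub1set inE fC exf.
pose Y := Z :\: f @: X1.
have hY : #|X2| <= #|Y|.
  case: (set_0Vmem X2) => [->|[x0 x0X2]]; first by rewrite cards0.
  apply: ltnW; apply: lemG.
  - apply/disjP => x /X2S [_ xC]; rewrite !inE => /andP[_ /andP[_ xC']].
    by rewrite xC' in xC.
  - by apply/set0Pn; exists x0.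
  move=> x xX; apply: (leq_trans (_ : 1 < deg C x)); first by move: xX; rewrite inE => /andP[].
  apply: subset_leq_card; apply/subsetP => y; rewrite !inE => /andP[yC exy].
  rewrite exy yC andbT /=; apply/andP; split.
    apply/negP => /imsetP [x' x'X yE]; have := fX2 x x' xX x'X; by rewrite -yE exy.
  rewrite andbT; have [xS _] := X2S x xX; apply/negP => yS; by have := ind _ _ xS yS; rewrite exy.
have cf : #|f @: X1| = #|X1| by apply: card_in_imset.
have sfZ : f @: X1 \subset Z by apply/subsetP => y /imsetP [x xX ->]; apply: fZ.
have cY : #|Y| = #|Z| - #|X1| by rewrite cardsD (setIidPr sfZ) cf.
have hZ : #|X1| <= #|Z| by rewrite -cf; apply: subset_leq_card.
have cX : #|X| = #|X1| + #|X2| by rewrite XU cardsU (disjoint_setI0 dX12) cards0 subn0.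
have cS : #|S| = #|S :&: C| + #|X| by rewrite cardsID.
have cC : #|C| = #|S :&: C| + #|Z| by rewrite setIC cardsID.
rewrite cS cC; move: hY cY hZ cX.
generalize #|X| #|X1| #|X2| #|Y| #|Z| #|S :&: C| => a b c d f' g; clear; lia.
Qed.

Lemma le1_eq (B : {set T}) a b : #|B| <= 1 -> a \in B -> b \in B -> a = b.
Proof.
move=> hB aB bB; apply/eqP/negPn/negP => ab.
have : #|[set a; b]| <= #|B|.
  by apply: subset_leq_card; apply/subsetP => z; rewrite !inE => /orP[]/eqP->.
by rewrite cards2 ab => /leq_trans /(_ hB).
Qed.

Lemma leaf (A : {set T}) x y : x \in A -> y \in A -> e x y ->
  exists l p, [/\ l \in A, p \in A, e p l, (forall z, z \in A -> e l z -> z = p) &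
   (forall a b, a \in A -> b \in A -> e p a -> e p b ->
      (exists z, [/\ z \in A, z != p & e a z]) ->
      (exists z, [/\ z \in A, z != p & e b z]) -> a = b)].
Proof.
move=> xA yA exy.
pose W := [set z in A | 1 < deg A z].
have inW : forall z, (z \in W) = (z \in A) && (1 < deg A z) by move=> z; rewrite inE.
clearbody W.
have deg2 : forall a p, a \in A -> p \in A -> e p a -> (exists z, [/\ z \in A, z != p & e a z]) -> a \in W.
  move=> a p aA pA epa [z [zA zp eaz]]; rewrite inW aA /=.
  by apply: (deg_ge2 pA zA); rewrite 1?eq_sym // esym.
case: (set_0Vmem W) => [W0|[w wW]].
  exists y, x; split => //.
    move=> z zA eyz; have : y \notin W by rewrite W0 inE.
    rewrite inW yA /= -leqNgt => h.
    by apply: (le1_eq h); rewrite inE ?zA ?eyz // xA esym.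
  move=> a b aA bA epa _ ha _; have := deg2 a x aA xA epa ha.
  by rewrite W0 inE.
have W0 : W != set0 by apply/set0Pn; exists w.
have := forest W0 => hf.
have [p pW hp] : exists2 p, p \in W & deg W p <= 1.
  case: (boolP [exists p in W, deg W p <= 1]); first by case/exists_inP => p; exists p.
  move/exists_inPn => H; exfalso.
  have : 2 * #|W| <= E W W.
    rewrite mulnC -sum_nat_const; apply: leq_sum => z /H; by rewrite -ltnNge.
  by rewrite leqNgt hf.
have pA : p \in A by move: pW; rewrite inW => /andP[].
have [l [lA epl lW]] : exists l, [/\ l \in A, e p l & l \notin W].
  case: (boolP [exists l in A, e p l && (l \notin W)]).
    by case/exists_inP => l lA /andP[? ?]; exists l.
  move/exists_inPn => H; exfalso.
  have : deg A p <= deg W p.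
    apply: subset_leq_card; apply/subsetP => z; rewrite !inE => /andP[zA epz].
    have := H z zA; rewrite epz /= negbK => ->; done.
  move: pW; rewrite inW => /andP[_ h1] h2.
  by have := leq_trans h1 (leq_trans h2 hp).
exists l, p; split => //.
  move=> z zA elz; move: lW; rewrite inW lA /= -leqNgt => h.
  by apply: (le1_eq h); rewrite inE ?zA ?elz // pA esym.
move=> a b aA bA epa epb ha hb.
have aW := deg2 a p aA pA epa ha; have bW := deg2 b p bA pA epb hb.
by apply: (le1_eq hp); rewrite inE ?aW ?bW.
Qed.

Definition goodA (A O : {set T}) := forall u, u \in O ->
  (exists c1 c2, [/\ c1 \in A :\: O, c2 \in A :\: O, c1 != c2, e u c1 & e u c2]) \/
  (exists c, [/\ c \in A :\: O, e u c & forall v, v \in O -> v != u -> ~~ e v c]).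

Lemma good_nb (A O : {set T}) (u : T) : goodA A O -> u \in O -> exists c, c \in A :\: O /\ e u c.
Proof.
move=> g uO; case: (g u uO) => [[c1 [c2 [h1 _ _ h2 _]]]|[c [h1 h2 _]]]; by eauto.
Qed.

Lemma upper n : forall A : {set T}, #|A| <= n -> exists O S : {set T},
  [/\ O \subset A, S \subset A, goodA A O, independent e S & #|S| + #|O| = #|A|].
Proof.
elim: n => [|n IH] A hA;
  (case: (boolP [exists x in A, exists y in A, e x y]) => [/exists_inP [x xA /exists_inP [y yA exy]]|noedge];
  last first).
- exists set0, A; split => //; first by rewrite sub0set.
  + by move=> u; rewrite inE.
  + move=> a b aA bA; apply/negP => eab; move/exists_inPn: noedge => /(_ a aA).
    by move/exists_inPn => /(_ b bA); rewrite eab.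
  + by rewrite cards0 addn0.
- by move: hA; rewrite leqn0 => /eqP/cards0_eq A0; move: xA; rewrite A0 inE.
- exists set0, A; split => //; first by rewrite sub0set.
  + by move=> u; rewrite inE.
  + move=> a b aA bA; apply/negP => eab; move/exists_inPn: noedge => /(_ a aA).
    by move/exists_inPn => /(_ b bA); rewrite eab.
  + by rewrite cards0 addn0.
have [l [p [lA pA epl lleaf pprop]]] := leaf xA yA exy.
have lp : l != p by apply/negP => /eqP lp; move: epl; rewrite lp eirr.
have [A' A'def] : exists A', A' = A :\: [set l; p] by eexists.
have lA' : l \notin A' by rewrite A'def !inE eqxx.
have pA' : p \notin A' by rewrite A'def !inE eqxx orbT.
have A'A : forall z, z \in A' -> z \in A by move=> z; rewrite A'def inE => /andP[].
have zl : forall z, z \in A' -> z != l by move=> z; rewrite A'def !inE => /andP[/norP[]].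
have zp : forall z, z \in A' -> z != p by move=> z; rewrite A'def !inE => /andP[/norP[]].
have cA' : #|A'| + 2 = #|A|.
  have sub : [set l; p] \subset A by apply/subsetP => z; rewrite !inE => /orP[]/eqP->.
  rewrite A'def cardsD (setIidPr sub) cards2 lp.
  have := subset_leq_card sub; rewrite cards2 lp => h.
  by rewrite subnK.
have [O' [S' [OA' SA' g' ind' cnt']]] : exists O S : {set T},
  [/\ O \subset A', S \subset A', goodA A' O, independent e S & #|S| + #|O| = #|A'|].
  by apply: IH; move: hA cA'; generalize #|A'| #|A| => a b; clear; lia.
have lS' : l \notin S' by apply/negP => /(subsetP SA'); rewrite (negbTE lA').
have lO' : l \notin O' by apply/negP => /(subsetP OA'); rewrite (negbTE lA').
have pO' : p \notin O' by apply/negP => /(subsetP OA'); rewrite (negbTE pA').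
have indS : independent e (l |: S').
  move=> a b; rewrite !inE => /orP[/eqP->|aS] /orP[/eqP->|bS].
  + by rewrite eirr.
  + apply/negP => elb; have bA' := subsetP SA' b bS.
    by have := lleaf b (A'A b bA') elb; move/eqP; rewrite (negbTE (zp b bA')).
  + apply/negP => eal; have aA' := subsetP SA' a aS.
    by have := lleaf a (A'A a aA'); rewrite esym => /(_ eal) /eqP; rewrite (negbTE (zp a aA')).
  + exact: ind'.
have SA : l |: S' \subset A.
  by apply/subsetP => z; rewrite !inE => /orP[/eqP->//|/(subsetP SA') /A'A].
have cS : #|l |: S'| = #|S'| + 1 by rewrite cardsU1 lS' addnC.
have liftC : forall z X, z \in A' :\: O' -> X \in [set l; p] -> z \in A :\: (X |: O').
  move=> z X; rewrite !inE => /andP[zO zA'] HX; rewrite (negbTE zO) orbF (A'A z zA') andbT.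
  by move: HX => /orP[]/eqP->; [exact: zl | exact: zp].
case: (boolP [exists v in O', e p v]) => [/exists_inP [v0 v0O epv0]|nov].
- exists (p |: O'), (l |: S'); split => //.
  + by apply/subsetP => z; rewrite !inE => /orP[/eqP->//|/(subsetP OA') /A'A].
  + move=> u; rewrite in_setU1 => /orP[/eqP->|uO].
      right; exists l; split => //.
        by rewrite !inE (negbTE lp) (negbTE lO') lA.
      move=> v; rewrite in_setU1 => /orP[/eqP->|vO]; first by rewrite eqxx.
      move=> _; apply/negP => evl; have vA' := subsetP OA' v vO.
      by have := lleaf v (A'A v vA'); rewrite esym => /(_ evl) /eqP; rewrite (negbTE (zp v vA')).
    case: (g' u uO) => [[c1 [c2 [h1 h2 h3 h4 h5]]]|[c [h1 h2 h3]]].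
      by left; exists c1, c2; split => //; apply: liftC => //; rewrite !inE eqxx orbT.
    right; exists c; split => //; first by apply: liftC => //; rewrite !inE eqxx orbT.
    move=> v; rewrite in_setU1 => /orP[/eqP->|vO]; last exact: h3.
    move=> _; apply/negP => epc.
    have cA'' : c \in A' by move: h1; rewrite inE => /andP[].
    have uA' := subsetP OA' u uO; have v0A' := subsetP OA' v0 v0O.
    have := pprop c v0 (A'A c cA'') (A'A v0 v0A') epc epv0.
    have [c' [c'C ev0c']] := good_nb g' v0O.
    have c'A' : c' \in A' by move: c'C; rewrite inE => /andP[].
    move=> /(_ (ex_intro _ u (And3 (A'A u uA') (zp u uA') _))).
    rewrite esym => /(_ h2) /(_ (ex_intro _ c' (And3 (A'A c' c'A') (zp c' c'A') ev0c'))) cv0.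
    by move: h1; rewrite inE cv0 v0O.
  + by rewrite cS cardsU1 (negbTE pO') /= -cA' -cnt'; generalize #|S'| #|O'| => a b; clear; lia.
- exists (l |: O'), (l |: S'); split => //.
  + by apply/subsetP => z; rewrite !inE => /orP[/eqP->//|/(subsetP OA') /A'A].
  + move=> u; rewrite in_setU1 => /orP[/eqP->|uO].
      right; exists p; split; first by rewrite !inE (negbTE pO') pA eq_sym (negbTE lp).
        by rewrite esym.
      move=> v; rewrite in_setU1 => /orP[/eqP->|vO]; first by rewrite eqxx.
      move=> _; rewrite esym; apply/negP => epv; move/exists_inPn: nov => /(_ v vO).
      by rewrite epv.
    case: (g' u uO) => [[c1 [c2 [h1 h2 h3 h4 h5]]]|[c [h1 h2 h3]]].
      by left; exists c1, c2; split => //; apply: liftC => //; rewrite !inE eqxx.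
    right; exists c; split => //; first by apply: liftC => //; rewrite !inE eqxx.
    move=> v; rewrite in_setU1 => /orP[/eqP->|vO]; last exact: h3.
    move=> _; apply/negP => elc.
    have cA'' : c \in A' by move: h1; rewrite inE => /andP[].
    have := lleaf c (A'A c cA'') elc; move/eqP; by rewrite (negbTE (zp c cA'')).
  + by rewrite cS cardsU1 (negbTE lO') /= -cA' -cnt'; generalize #|S'| #|O'| => a b; clear; lia.
Qed.
End Tree.
End G.

Theorem mainTheorem13 (T : finType) (e : rel T) :
  is_tree e -> exists n, gammaDLD_is e n /\ beta_is e n.
Proof.
move=> [[esym eirr] [hT [hconn hedges]]].
have [O [S [_ _ good ind cnt]]] := upper esym eirr hT hconn hedges (leqnn #|[set: T]|).
pose C := [set: T] :\: O.
have inC : forall z, (z \in C) = (z \notin O) by move=> z; rewrite !inE andbT.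
clearbody C.
have solid : solid_LD e C.
  split; [|split].
  - case/card_gt0P: hT => t _; apply/set0Pn.
    case: (boolP (t \in O)) => tO; last by exists t; rewrite inC.
    have [c [cC _]] := good_nb good tO; exists c; move: cC; rewrite !inE inC; by case/andP.
  - move=> u; rewrite inC negbK => uO; have [c [cC euc]] := good_nb good uO.
    apply/set0Pn; exists c; rewrite IcodeE ?inC ?negbK // inE euc andbT inC.
    by move: cC; rewrite !inE => /andP[].
  - move=> u v; rewrite !inC !negbK => uO vO uv; apply/negP => sub.
    have uC : u \notin C by rewrite inC negbK.
    have vC : v \notin C by rewrite inC negbK.
    move: sub; rewrite !IcodeE // => sub.
    have tr : forall c, c \in [set: T] :\: O -> e u c -> e v c.
      move=> c cC euc; have : c \in [set y in C | e u y].
        by rewrite inE euc inC andbT; move: cC; rewrite !inE => /andP[].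
      by move/(subsetP sub); rewrite inE => /andP[].
    case: (good u uO) => [[c1 [c2 [h1 h2 h3 h4 h5]]]|[c [h1 h2 h3]]].
      have := @lemG _ _ esym hT hconn hedges [set u; v] [set c1; c2].
      rewrite !cards2 uv h3 ltnn => H; suff : false by []; apply: H.
      + apply: disjP => z; rewrite !inE => /orP[]/eqP-> /orP[]/eqP ez.
        * by move: h1; rewrite -ez !inE uO.
        * by move: h2; rewrite -ez !inE uO.
        * by move: h1; rewrite -ez !inE vO.
        * by move: h2; rewrite -ez !inE vO.
      + by apply/set0Pn; exists u; rewrite !inE eqxx.
      move=> z; rewrite !inE => /orP[]/eqP->.
        by apply: (deg_ge2 (y := c1) (z := c2)); rewrite ?inE ?eqxx ?orbT.
      by apply: (deg_ge2 (y := c1) (z := c2)); rewrite ?inE ?eqxx ?orbT //; apply: tr.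
    have := h3 v vO; rewrite eq_sym uv => /(_ isT); by rewrite (tr c h1 h2).
have cC : #|C| = #|S|.
  have : #|C| + #|O| = #|S| + #|O|.
    rewrite cnt cardsT -(cardsC O) addnC; congr (_ + _).
    by apply: eq_card => z; rewrite inC in_setC.
  generalize #|C| #|O| #|S| => a b c'; clear; lia.
exists #|C|; split; split.
- by exists C.
- by move=> C' sC'; rewrite cC; apply: (lower esym hT hconn hedges sC' ind).
- by exists S; split.
- by move=> S' iS'; apply: (lower esym hT hconn hedges solid iS').
Qed.
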